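(* Let $N\ge 3$, let $k$ be a positive odd integer, $l=k2^N$, let $m$ be a positive integer and $n=l+m$. For a positive integer $a$ let $g(a)=(-1)^{a-1}\frac{(2a-3)!!}{2a}$. Then $$g(n)\equiv g(m)+\begin{cases}(-1)^{\frac{m-1}{2}}\frac{l}{2}\pmod{2^{N+1}}, & \text{if } 2\nmid m,\\ l+\frac{l}{2mn}\pmod{2^{N+1}}, & \text{if } 2\mid m,\ 4\nmid m,\\ l-\frac{l}{2mn}\pmod{2^{N+1}}, & \text{if } 4\mid m,\ 8\nmid m.\end{cases}$$
   Context: For a positive odd integer $b$, $b!!=b(b-2)\cdots3\cdot1$, and $(-1)!!=1$. Congruences between rational numbers modulo $2^{N+1}$ mean the difference has $2$-adic valuation $\ge N+1$. *)

(* Defs.v *)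
From HB Require Import structures.
From mathcomp Require Import all_boot all_order all_algebra.
Set Implicit Arguments. Unset Strict Implicit. Unset Printing Implicit Defensive.
Import Order.TTheory GRing.Theory Num.Theory.

Fixpoint dfact (b : nat) : nat :=
  match b with
  | 0 => 1
  | 1 => 1
  | b'.+2 => b'.+2 * dfact b'
  end.

Local Open Scope ring_scope.

(* g(a) = (-1)^(a-1) (2a-3)!! / (2a).  For a = 1, (2a-3)!! = (-1)!! = 1;
   with truncated nat subtraction 2*1-3 = 0 and dfact 0 = 1, as required. *)
Definition g (a : nat) : rat :=
  (-1) ^+ (a - 1)%N * (dfact (2 * a - 3)%N)%:R / (2 * a)%:R.

Definition v2_ge (e : nat) (q : rat) : bool :=
  (q == 0) ||
  (e + logn 2 `|denq q|%N <= logn 2 `|numq q|%N)%N.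

(* x = y (mod 2^(N+1)) for rationals: v2 (x - y) >= N+1. *)
Definition cong2 (N : nat) (x y : rat) : Prop := v2_ge N.+1 (x - y).

(* Main.v *)
Require Import Defs.
From mathcomp Require Import all_boot all_order all_algebra ring lra zify.
Import Order.TTheory GRing.Theory Num.Theory.
Local Open Scope ring_scope.

Definition Ez (l : nat) (a : int) : int := \prod_(j < l) (a + 2 * j%:Z).

Lemma Ez0 a : Ez 0 a = 1.
Proof. by rewrite /Ez big_ord0. Qed.

Lemma Ez_recr l a : Ez l.+1 a = Ez l a * (a + 2 * l%:Z).
Proof. by rewrite /Ez big_ord_recr. Qed.

Lemma Ez_recl l a : Ez l.+1 a = a * Ez l (a + 2).
Proof.
rewrite /Ez big_ord_recl /= mulr0 addr0; congr (_ * _).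
apply: eq_bigr => i _; rewrite /bump /= PoszD; ring.
Qed.

Lemma Ez_split l1 l2 a : Ez (l1 + l2) a = Ez l1 a * Ez l2 (a + 2 * l1%:Z).
Proof.
rewrite /Ez big_split_ord /=; congr (_ * _).
apply: eq_bigr => i _; rewrite /= PoszD; ring.
Qed.

Lemma Ez_refl n a : Ez n a = (-1) ^+ n * Ez n (- a - 2 * n%:Z + 2).
Proof.
elim: n a => [|n IH] a; first by rewrite !Ez0 expr0 mulr1.
rewrite Ez_recl IH Ez_recr exprS.
have -> : (- (a + 2) - 2 * n%:Z + 2) = (- a - 2 * n.+1%:Z + 2).
  rewrite intS; ring.
rewrite intS; ring.
Qed.

Lemma dfact_Ez i : (dfact (2 * i - 1))%:Z = Ez i 1.
Proof.
elim: i => [|i IH]; first by rewrite Ez0.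
rewrite Ez_recr -IH.
case: i {IH} => [|i]; first by [].
have -> : (2 * i.+2 - 1 = (2 * i.+1 - 1) + 2)%N by lia.
rewrite /dfact -/dfact addn2 PoszM.
have -> : (2 * i.+1 - 1).+2 = (1 + 2 * i.+1)%N by lia.
rewrite PoszD PoszM mulrC //.
Qed.

Lemma tri (n : nat) : exists h : int, n%:Z * (n%:Z + 1) = 2 * h.
Proof.
elim: n => [|n [h IH]]; first by exists 0.
exists (h + n%:Z + 1); rewrite intS.
transitivity (n%:Z * (n%:Z + 1) + 2 * (n%:Z + 1)); first ring.
rewrite IH; ring.
Qed.

Lemma Ez_expand (c M u w : int) : 8 * c = M * u -> c * c = M * w ->
  forall n : nat, exists y, Ez n (1 + c) = Ez n 1 * (1 + c * n%:Z ^+ 2) + M * y.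
Proof.
move=> Hu Hw; elim=> [|n [y IH]]; first by exists 0; rewrite !Ez0; ring.
have [h Hh'] := tri n.
rewrite !Ez_recr.
set p := Ez n 1.
exists (y * (1 + c + 2 * n%:Z) - p * u * h + p * w * n%:Z ^+ 2).
rewrite intS.
have E1 : Ez n (1 + c) * (1 + c + 2 * n%:Z) = p * (1 + 2 * n%:Z) * (1 + c * (1 + n%:Z) ^+ 2)
   + M * y * (1 + c + 2 * n%:Z) - p * c * 4 * (n%:Z * (n%:Z + 1)) + p * (c * c) * n%:Z ^+ 2.
  rewrite IH; ring.
rewrite E1 Hh' Hw.
have E2 : p * c * 4 * (2 * h) = p * (8 * c) * h by ring.
rewrite E2 Hu; ring.
Qed.

Lemma Ez_shift (l : nat) (L4 k x : int) : l%:Z = 4 * L4 * k ->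
  Ez l 1 = 1 + 2 * l%:Z + 64 * L4 * x ->
  forall i : nat, exists y, Ez l (2 * i%:Z + 1) = 1 + 2 * l%:Z * (1 + i%:Z ^+ 2) + 64 * L4 * y.
Proof.
move=> Hl H0; elim=> [|i [y IH]].
  by exists x; rewrite mulr0 add0r H0; ring.
case: l Hl H0 IH => [|l'] Hl H0 IH.
  by exists 0; rewrite Ez0; ring.
rewrite intS in Hl IH *.
rewrite Ez_recl in IH.
have -> : 2 * (1 + i%:Z) + 1 = (2 * i%:Z + 1) + 2 by ring.
rewrite Ez_recr.
set R := Ez l' _.
have [h Hh] := tri i.
have E1 : R * (2 * i%:Z + 1 + 2 + 2 * l'%:Z) =
  ((2 * i%:Z + 1) * R) * (1 + 2 * (1 + l'%:Z) * (2 * i%:Z + 1))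
  - 2 * (1 + l'%:Z) * R * 4 * (i%:Z * (i%:Z + 1)) by ring.
rewrite E1 IH Hh !Hl.
exists (y * (1 + 2 * (4 * L4 * k) * (2 * i%:Z + 1)) + L4 * k ^+ 2 * (2 * i%:Z + 1) * (1 + i%:Z ^+ 2) - k * R * h).
ring.
Qed.

Lemma pow2_split {N} : (3 <= N)%N -> (2 ^ N)%:Z = 8 * (2 ^ (N - 3))%:Z.
Proof.
move=> HN; rewrite -PoszM; congr Posz.
by rewrite -{1}(subnK HN) expnD mulnC.
Qed.

Lemma Ez8 : Ez 8 1 = 1 + 2 * 8 + 16 * 8 * 15836.
Proof. rewrite /Ez !big_ord_recr big_ord0 /=. ring. Qed.

Lemma Ez_pow2 N : (3 <= N)%N ->
  exists x, Ez (2 ^ N) 1 = 1 + 2 * (2 ^ N)%:Z + 16 * (2 ^ N)%:Z * x.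
Proof.
elim: N => [//|N IH] HN.
case: (ltnP N 3) => HN3.
  have -> : N = 2%N by lia.
  by exists 15836; rewrite Ez8.
have [x Hx] := IH HN3.
have hL := pow2_split HN3.
set L8 := (2 ^ (N - 3))%:Z in hL.
have -> : (2 ^ N.+1 = 2 ^ N + 2 ^ N)%N by rewrite expnS mul2n addnn.
rewrite Ez_split [Ez _ (1 + _)]Ez_refl.
have -> : (-1) ^+ (2 ^ N) = 1 :> int.
  by rewrite -signr_odd oddX orbF (_ : (N == 0) = false) //; apply/eqP; lia.
have -> : - (1 + 2 * (2 ^ N)%:Z) - 2 * (2 ^ N)%:Z + 2 = 1 + (- 4 * (2 ^ N)%:Z) by ring.
have [y Hy] := Ez_expand (- 4 * (2 ^ N)%:Z) (32 * (2 ^ N)%:Z) (-1)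
   (4 * L8) ltac:(rewrite hL; ring) ltac:(rewrite hL; ring) (2 ^ N).
rewrite mul1r Hy Hx PoszD hL.
set E1 := 1 + 2 * (8 * L8) + 16 * (8 * L8) * x.
exists (x + L8 * (1 + 8 * x) ^+ 2 - 8 * L8 * L8 * E1 ^+ 2 + y * E1).
rewrite /E1; ring.
Qed.

Lemma Ez_k N : (3 <= N)%N -> forall k : nat,
  exists x, Ez (k * 2 ^ N) 1 = 1 + 2 * (k * 2 ^ N)%:Z + 16 * (2 ^ N)%:Z * x.
Proof.
move=> HN; have [x0 H0] := Ez_pow2 N HN.
have hL := pow2_split HN.
set L8 := (2 ^ (N - 3))%:Z in hL.
have h1 : (2 ^ N)%:Z = 4 * (2 * L8) * 1 by rewrite hL; ring.
have h2 : Ez (2 ^ N) 1 = 1 + 2 * (2 ^ N)%:Z + 64 * (2 * L8) * x0 by rewrite H0 hL; ring.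
have Hs := Ez_shift _ _ _ _ h1 h2.
elim=> [|k [x IH]]; first by exists 0; rewrite mul0n Ez0; ring.
rewrite mulSnr Ez_split IH.
have [y Hy] := Hs (k * 2 ^ N)%N.
rewrite (_ : 1 + 2 * (k * 2 ^ N)%:Z = 2 * (k * 2 ^ N)%:Z + 1); last by ring.
rewrite Hy !PoszD !PoszM hL.
exists (x + y + (k%:Z) ^+ 2 * L8 * (8 * L8) + 2 * L8 * (k%:Z + 8 * x) * (1 + (k%:Z) ^+ 2 * (8 * L8) ^+ 2 + 8 * y)).
ring.
Qed.

Lemma P_cong N k : (3 <= N)%N -> forall i : nat,
  exists x, Ez (k * 2 ^ N) (2 * i%:Z + 1) =
     1 + 2 * (k * 2 ^ N)%:Z * (1 + i%:Z ^+ 2) + 16 * (2 ^ N)%:Z * x.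
Proof.
move=> HN; have [x0 H0] := Ez_k N HN k.
have hL := pow2_split HN.
set L8 := (2 ^ (N - 3))%:Z in hL.
have h1 : (k * 2 ^ N)%:Z = 4 * (2 * L8) * k by rewrite PoszM hL; ring.
have h2 : Ez (k * 2 ^ N) 1 = 1 + 2 * (k * 2 ^ N)%:Z + 64 * (2 * L8) * x0 by rewrite H0 hL; ring.
have Hs := Ez_shift _ _ _ _ h1 h2.
move=> i; have [y Hy] := Hs i.
by exists y; rewrite Hy hL; ring.
Qed.
Lemma dfact2 b : dfact (b + 2) = ((b + 2) * dfact b)%N.
Proof. by rewrite addn2. Qed.

Lemma dfact4 j : exists y : int, (dfact (4*j+1))%:Z = (-1)^+j + 4*y.
Proof.
elim: j => [|j [y IH]]; first by exists 0.
have -> : (4 * j.+1 + 1 = 4*j+1+2+2)%N by lia.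
rewrite !dfact2 !PoszM IH exprS.
exists (4 * (j%:Z+1)^2 * (-1)^+j - y + 16 * (j%:Z+1)^2 * y).
rewrite !PoszD ?PoszM. ring.
Qed.

Lemma dfact8 j : exists y : int, (dfact (8*j+1))%:Z = 1 + 16*y.
Proof.
elim: j => [|j [y IH]]; first by exists 0.
have -> : (8 * j.+1 + 1 = 8*j+1+2+2+2+2)%N by lia.
rewrite !dfact2 !PoszM IH.
pose r : int := 16 * (4*j%:Z^2+6*j%:Z)^2 + 62*(4*j%:Z^2+6*j%:Z) + 59.
exists (y + r + 16*y*r).
rewrite /r !PoszD ?PoszM. ring.
Qed.

Lemma dfact16 j : exists y : int, (dfact (16*j+5))%:Z = 15 + 32 * j%:Z + 64*y.
Proof.
elim: j => [|j [y IH]]; first by exists 0.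
have -> : (16 * j.+1 + 5 = 16*j+5+2+2+2+2+2+2+2+2)%N by lia.
rewrite !dfact2 !PoszM IH.
pose J := j%:Z.
pose K : int := 1000.
pose r : int := (198+322*K^1+14*K^2)*J^0 + (428+387*K^1+148*K^2)*J^1 + (424+925*K^1+658*K^2)*J^2 + (152+601*K^1+639*K^2+1*K^3)*J^3 + (216+793*K^1+502*K^2+2*K^3)*J^4 + (472+25*K^1+402*K^2+2*K^3)*J^5 + (176+626*K^1+416*K^2+1*K^3)*J^6 + (48+762*K^1+469*K^2)*J^7 + (864+108*K^1+67*K^2)*J^8.
exists (7 + 16*J + 33*y + r*(15+32*J+64*y)).
rewrite /r /J /K !PoszD ?PoszM. ring.
Qed.
Lemma v2_frac (e : nat) (A : int) (B : nat) : odd B ->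
  v2_ge e ((2 ^ e)%:R * A%:~R / B%:R).
Proof.
move=> oB; set q := _ / _.
rewrite /v2_ge; case: eqP => //= /eqP q0.
have B0 : B%:R != 0 :> rat by rewrite pnatr_eq0; apply/eqP=> B0; rewrite B0 in oB.
have A0 : A != 0.
  apply/eqP=> A0; move: q0; rewrite /q A0 mulr0 mul0r eqxx //.
have H : numq q * B%:Z = 2 ^ e * A * denq q.
  apply: (@intr_inj rat).
  rewrite !intrM numqE.
  have -> : ((Posz B)%:~R : rat) = B%:R by rewrite -pmulrn.
  have -> : ((2 ^ e : int)%:~R : rat) = (2 ^ e)%:R by rewrite rmorphXn /= natrX.
  rewrite /q. field. exact B0.
have H2 : (`|numq q| * B = 2 ^ e * `|A| * `|denq q|)%N.
  have := congr1 absz H. rewrite !abszM /=. rewrite abszX. done.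
have nq0 : (0 < `|numq q|)%N by rewrite absz_gt0 numq_eq0.
have dq0 : (0 < `|denq q|)%N by rewrite absz_gt0 denq_eq0.
have oB0 : (0 < B)%N by move: oB; case: (B)...
have A0' : (0 < `|A|)%N by rewrite absz_gt0.
have := congr1 (logn 2) H2.
rewrite (lognM 2 nq0 oB0) (lognM 2 _ dq0) ?muln_gt0 ?expn_gt0 ?A0' //.
rewrite (lognM 2 _ A0') ?expn_gt0 //.
rewrite pfactorK // (logn_coprime (p:=2) (m:=B)) ?addn0; last first.
  by rewrite coprime2n oB.
move=> ->. lia.
Qed.

Lemma natq (n : nat) : ((n%:Z)%:~R : rat) = n%:R.
Proof. by rewrite -pmulrn. Qed.

Lemma odd21 a : odd (2 * a + 1).
Proof. by rewrite oddD oddM. Qed.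

Theorem lemma4p5 (N k m : nat) :
  (3 <= N)%N -> (0 < k)%N -> odd k -> (0 < m)%N ->
  let l := (k * 2 ^ N)%N in
  let n := (l + m)%N in
  [/\ odd m ->
        cong2 N (g n) (g m + (-1) ^+ ((m - 1) %/ 2)%N * (l%:R / 2)),
      (2 %| m)%N -> ~~ (4 %| m)%N ->
        cong2 N (g n) (g m + l%:R + l%:R / (2 * m * n)%:R)
    & (4 %| m)%N -> ~~ (8 %| m)%N ->
        cong2 N (g n) (g m + l%:R - l%:R / (2 * m * n)%:R)].
Proof.
move=> HN hk ok hm l n.
have hL := pow2_split HN.
set L8 := (2 ^ (N - 3))%:Z in hL.
have [x Hx] := P_cong N k HN (m - 1).
set P := Ez _ _ in Hx.
have hdf : (dfact (2 * n - 3))%:Z = (dfact (2 * m - 3))%:Z * P.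
  have -> : (2 * n - 3 = 2 * ((m - 1) + l) - 1)%N by rewrite /n; lia.
  have -> : (2 * m - 3 = 2 * (m - 1) - 1)%N by lia.
  rewrite !dfact_Ez Ez_split /P /l; congr (_ * _); congr Ez; ring.
have hs : ((-1) ^+ (n - 1) : rat) = (-1) ^+ (m - 1).
  rewrite -signr_odd -[in RHS]signr_odd.
  have -> : (n - 1 = l + (m - 1))%N by rewrite /n; lia.
  by rewrite oddD /l oddM oddX (_ : (N == 0) = false) ?andbF //; apply/eqP; lia.
have gn : g n = (-1) ^+ (m - 1) * ((dfact (2 * m - 3))%:R * P%:~R) / (2 * n%:R).
  rewrite /g hs -natq hdf intrM natq natrM //.
have gm : g m = (-1) ^+ (m - 1) * (dfact (2 * m - 3))%:R / (2 * m%:R).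
  by rewrite /g natrM.
have lq : (l%:R : rat) = k%:R * (8 * L8%:~R).
  by rewrite /l natrM -[(2 ^ N)%:R]natq hL rmorphM.
have HxQ := congr1 (fun z : int => (z%:~R : rat)) Hx.
rewrite /= !(rmorphD, rmorphM, rmorphXn, rmorph1) /= !natq in HxQ.
have L2q : ((2 ^ N)%:R : rat) = 8 * (2 ^ (N - 3))%:R by rewrite -natq hL rmorphM /= natq.
rewrite L2q in HxQ; rewrite /L8 natq in lq.
set Lq : rat := (2 ^ (N - 3))%:R in HxQ lq L2q.
have Lq0 : 0 <= Lq by rewrite /Lq ler0n.
have kq0 : 0 <= (k%:R : rat) by rewrite ler0n.
have hN1 : ((2 ^ N.+1)%:R : rat) = 16 * Lq by rewrite expnS natrM L2q; ring.
split.
- move=> om.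
  have [j hmj] : exists j, m = (2 * j + 1)%N.
    by exists m./2; rewrite -[m in LHS]odd_double_half om -mul2n addnC.
  have [y Hy] := dfact4 j.
  have hd : dfact (4 * j + 1) = ((4 * j + 1) * dfact (2 * m - 3))%N.
    case: j hmj {Hy} => [|j'] hmj; first by rewrite hmj.
    rewrite (_ : (2 * m - 3)%N = (4 * j' + 3)%N); last by clear -hmj; lia.
    rewrite (_ : (4 * j'.+1 + 1)%N = (4 * j' + 3 + 2)%N); last by lia.
    by rewrite dfact2.
  have he : (4 * j%:R + 1) * (dfact (2 * m - 3))%:R = ((-1) ^+ j : rat) + 4 * y%:~R.
    move/(congr1 (fun z : int => (z%:~R : rat))): Hy.
    rewrite hd natq natrM natrD natrM rmorphD rmorphXn rmorphN1 rmorphM /= => ->.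
    by [].
  have he' : ((-1) ^+ j : rat) = (4 * j%:R + 1) * (dfact (2 * m - 3))%:R - 4 * y%:~R.
    by rewrite he; ring.
  have -> : ((m - 1) %/ 2 = j)%N by rewrite hmj addnK mulKn.
  rewrite /cong2.
  pose D : int := (dfact (2 * m - 3))%:Z.
  pose E : int := D * (4 * j%:Z + 1) - 4 * y.
  pose mZ : int := 2 * j%:Z + 1.
  pose A : int := k%:Z * y + 2 * k%:Z * mZ * D * j%:Z ^+ 2 + 4 * x * mZ * D
     - E * k%:Z * j%:Z * (j%:Z + 1) - 2 * L8 * E * k%:Z ^+ 2 * mZ.
  pose B := ((2 * j + 1) * (2 * (4 * 2 ^ (N - 3) * k + j) + 1))%N.
  have oB : odd B by rewrite /B oddM !odd21.
  suff -> : g n - (g m + (-1) ^+ j * (l%:R / 2)) = (2 ^ N.+1)%:R * A%:~R / B%:R.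
    exact: v2_frac.
  have hsg : ((-1) ^+ (m - 1) : rat) = 1.
    have e : (m - 1 = 2 * j)%N by clear -hmj; lia.
    by rewrite -signr_odd e oddM /= expr0.
  have m1 : ((m - 1)%:R : rat) = 2 * j%:R.
    have e : (m - 1 = 2 * j)%N by clear -hmj; lia.
    by rewrite e natrM.
  have mq : (m%:R : rat) = 2 * j%:R + 1 by rewrite hmj natrD natrM.
  have nq : (n%:R : rat) = k%:R * (8 * Lq) + 2 * j%:R + 1 by rewrite /n natrD lq mq; ring.
  rewrite gn gm HxQ hsg he' m1 hN1 !natrM nq mq L2q /A /B /E /D /mZ /L8.
  rewrite /Lq.
  have kL0 : 0 <= (k%:R : rat) * (2 ^ (N - 3))%:R by apply: mulr_ge0; rewrite ler0n.
  have jq1 : 0 <= (j%:R : rat) by rewrite ler0n.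
  have Lq1 : 0 <= ((2 ^ (N - 3))%:R : rat) by rewrite ler0n.
  field.
  by rewrite !lt0r_neq0 //; nra.
- move=> h2 h4.
  have [j hmj] : exists j, m = (4 * j + 2)%N by exists (m %/ 4)%N; clear -h2 h4; lia.
  have [y Hy] := dfact8 j.
  have dq : ((dfact (2 * m - 3))%:R : rat) = (1 + 16 * y)%:~R.
    rewrite (_ : (2 * m - 3 = 8 * j + 1)%N); last by clear -hmj; lia.
    by rewrite -natq Hy.
  have jq0 : 0 <= (j%:R : rat) by rewrite ler0n.
  rewrite /cong2.
  pose A : int := - k%:Z * (1 + 2 * j%:Z + 2 * j%:Z ^+ 2 + 2 * L8 * k%:Z * (2 * j%:Z + 1))
    - k%:Z * (3 * j%:Z + 8 * j%:Z ^+ 2 + 8 * j%:Z ^+ 3) - x * (4 * j%:Z + 2)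
    - y * (7 * k%:Z + 16 * k%:Z * (3 * j%:Z + 8 * j%:Z ^+ 2 + 8 * j%:Z ^+ 3) + 16 * x * (4 * j%:Z + 2)).
  pose B := ((2 * j + 1) * (2 * (2 * 2 ^ (N - 3) * k + j) + 1))%N.
  have oB : odd B by rewrite /B oddM !odd21.
  suff -> : g n - (g m + l%:R + l%:R / (2 * m * n)%:R) = (2 ^ N.+1)%:R * A%:~R / B%:R.
    exact: v2_frac.
  have hsg : ((-1) ^+ (m - 1) : rat) = -1.
    rewrite -signr_odd (_ : (m - 1 = 2 * (2 * j) + 1)%N) ?odd21 ?expr1 //; clear -hmj; lia.
  have m1 : ((m - 1)%:R : rat) = 4 * j%:R + 1.
    have e : (m - 1 = 4 * j + 1)%N by clear -hmj; lia.
    by rewrite e natrD natrM.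
  have mq : (m%:R : rat) = 4 * j%:R + 2 by rewrite hmj natrD natrM.
  have nq : (n%:R : rat) = k%:R * (8 * Lq) + 4 * j%:R + 2 by rewrite /n natrD lq mq; ring.
  rewrite gn gm HxQ hsg dq m1 hN1 !natrM nq mq L2q /A /B /L8.
  rewrite /Lq.
  have kL0 : 0 <= (k%:R : rat) * (2 ^ (N - 3))%:R by apply: mulr_ge0; rewrite ler0n.
  have jq1 : 0 <= (j%:R : rat) by rewrite ler0n.
  have Lq1 : 0 <= ((2 ^ (N - 3))%:R : rat) by rewrite ler0n.
  field.
  by rewrite !lt0r_neq0 //; nra.
- move=> h4 h8.
  have [j hmj] : exists j, m = (8 * j + 4)%N by exists (m %/ 8)%N; clear -h4 h8; lia.
  have [y Hy] := dfact16 j.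
  have dq : ((dfact (2 * m - 3))%:R : rat) = (15 + 32 * j%:Z + 64 * y)%:~R.
    rewrite (_ : (2 * m - 3 = 16 * j + 5)%N); last by clear -hmj; lia.
    by rewrite -natq Hy.
  rewrite /cong2.
  pose B' : int := -19 - 169 * j%:Z - 574 * j%:Z ^+ 2 - 880 * j%:Z ^+ 3 - 512 * j%:Z ^+ 4 - L8 * k%:Z * (2 * j%:Z + 1).
  pose A : int := - (15 + 32 * j%:Z) * x * (2 * j%:Z + 1)
    - y * (16 * k%:Z * (2 * j%:Z + 1) * (5 + 24 * j%:Z + 32 * j%:Z ^+ 2) + 64 * x * (2 * j%:Z + 1) - k%:Z)
    + k%:Z * B'.
  pose B := ((2 * j + 1) * (2 * (2 ^ (N - 3) * k + j) + 1))%N.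
  have oB : odd B by rewrite /B oddM !odd21.
  suff -> : g n - (g m + l%:R - l%:R / (2 * m * n)%:R) = (2 ^ N.+1)%:R * A%:~R / B%:R.
    exact: v2_frac.
  have hsg : ((-1) ^+ (m - 1) : rat) = -1.
    have e : (m - 1 = 2 * (4 * j + 1) + 1)%N by clear -hmj; lia.
    by rewrite -signr_odd e odd21 expr1.
  have m1 : ((m - 1)%:R : rat) = 8 * j%:R + 3.
    have e : (m - 1 = 8 * j + 3)%N by clear -hmj; lia.
    by rewrite e natrD natrM.
  have mq : (m%:R : rat) = 8 * j%:R + 4 by rewrite hmj natrD natrM.
  have nq : (n%:R : rat) = k%:R * (8 * Lq) + 8 * j%:R + 4 by rewrite /n natrD lq mq; ring.
  rewrite gn gm HxQ hsg dq m1 hN1 !natrM nq mq L2q /A /B /B' /L8.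
  rewrite /Lq.
  have kL0 : 0 <= (k%:R : rat) * (2 ^ (N - 3))%:R by apply: mulr_ge0; rewrite ler0n.
  have jq1 : 0 <= (j%:R : rat) by rewrite ler0n.
  have Lq1 : 0 <= ((2 ^ (N - 3))%:R : rat) by rewrite ler0n.
  field.
  by rewrite !lt0r_neq0 //; nra.
Qed.
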